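(* Let $\widetilde C$ be an $\mathcal S$-complex over $R$. For all integers $i,j$ we have an $\mathcal S$-chain homotopy equivalence $\Sigma^i\Sigma^j\widetilde C\simeq\Sigma^{i+j}\widetilde C$.
   Context: Let $R$ be a commutative ring; graded modules are $\mathbb Z$-graded, $V[i]_j=V_{i+j}$, differentials have degree $-1$. An $\mathcal S$-complex over $R$ is a chain complex $(\widetilde C,\widetilde d)$ of finitely generated free graded $R$-modules with a graded decomposition $\widetilde C=C\oplus C[-1]\oplus\mathsf R$ in which $\widetilde d=\begin{pmatrix} d&0&0\\ v&-d&\delta_2\\ \delta_1&0&r\end{pmatrix}$; $\chi$ is the degree $1$ map sending $C$ identically onto $C[-1]$ and zero on $C[-1]\oplus\mathsf R$. A morphism is a degree $0$ chain map commuting with the $\chi$'s; an $\mathcal S$-chain homotopy between morphisms is a degree $1$ map $\widetilde K$ anticommuting with the $\chi$'s ($\chi'\widetilde K+\widetilde K\chi=0$) with $\widetilde d'\widetilde K+\widetilde K\widetilde d$ equal to their difference; $\simeq$ denotes $\mathcal S$-chain homotopy equivalence (a pair of morphisms whose composites are $\mathcal S$-chain homotopic to identities). The suspension $\Sigma\widetilde C$ is $C_\Sigma\oplus C_\Sigma[-1]\oplus\mathsf R$, $C_\Sigma=C[-2]\oplus\mathsf R[-1]$, with differential, in the ordered summands $C[-2],\mathsf R[-1],C[-3],\mathsf R[-2],\mathsf R$, $\begin{pmatrix} d&-\delta_2&0&0&0\\ 0&-r&0&0&0\\ v&0&-d&\delta_2&v\delta_2\\ \delta_1&0&0&r&\delta_1\delta_2\\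 0&1&0&0&r\end{pmatrix}$. The negative suspension $\Sigma^{-1}\widetilde C$ is $C_{\Sigma^{-1}}\oplus C_{\Sigma^{-1}}[-1]\oplus\mathsf R$, $C_{\Sigma^{-1}}=C[2]\oplus\mathsf R[2]$, with differential, in the ordered summands $C[2],\mathsf R[2],C[1],\mathsf R[1],\mathsf R$, $\begin{pmatrix} d&0&0&0&0\\ \delta_1&r&0&0&0\\ v&\delta_2&-d&0&0\\ 0&0&-\delta_1&-r&1\\ \delta_1v&\delta_1\delta_2&0&0&r\end{pmatrix}$. For $n>0$, $\Sigma^n$ is the $n$-fold iterate of $\Sigma$, $\Sigma^{-n}$ is the $n$-fold iterate of $\Sigma^{-1}$, and $\Sigma^0$ is the identity. *)

(* Defs.v *)
From HB Require Import structures.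
From mathcomp Require Import all_boot all_order all_algebra.
Unset Printing Implicit Defensive.
Import GRing.Theory Num.Theory.
Local Open Scope ring_scope.

(* A finitely generated free graded R-module is encoded by its rank n and the
   degrees of its basis vectors, deg : 'I_n -> int.  A homogeneous R-linear map
   V -> W is a matrix M : 'M_(rank W, rank V) acting on column vectors
   (f(e_j) = \sum_i M i j e'_i). *)

Definition homog {R : pzRingType} {k l : nat} (p : int)
  (a : 'I_l -> int) (b : 'I_k -> int) (M : 'M[R]_(k, l)) : Prop :=
  forall i j, M i j != 0 -> b i = a j + p.

Definition catdeg {n k : nat} (a : 'I_n -> int) (b : 'I_k -> int) : 'I_(n + k) -> int :=
  fun i => match split i with inl x => a x | inr y => b y end.

(* V[s]_j = V_{s+j}: a generator of degree d of V has degree d - s in V[s] *)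
Definition shiftdeg {n : nat} (s : int) (a : 'I_n -> int) : 'I_n -> int :=
  fun i => a i - s.

(* An S-complex over R, with a fixed graded free module 𝖱 (rank m, degrees rd).
   C has rank dimC and basis degrees cd. *)
Record Scx (R : comPzRingType) (m : nat) (rd : 'I_m -> int) := MkScx {
  dimC : nat;
  cd : 'I_dimC -> int;
  dd : 'M[R]_dimC;
  vv : 'M[R]_dimC;            (* v  : C -> C[-1] *)
  de1 : 'M[R]_(m, dimC);
  de2 : 'M[R]_(dimC, m);      (* δ2 : 𝖱 -> C[-1] *)
  rr : 'M[R]_m
}.

Arguments dimC {R m rd} _.
Arguments cd {R m rd} _ _.
Arguments dd {R m rd} _.
Arguments vv {R m rd} _.
Arguments de1 {R m rd} _.
Arguments de2 {R m rd} _.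
Arguments rr {R m rd} _.

Section S.
Context {R : comPzRingType} {m : nat} {rd : 'I_m -> int}.
Local Notation Sc := (@Scx R m rd).

Definition tdeg (X : Sc) : 'I_(dimC X + dimC X + m) -> int :=
  catdeg (catdeg (cd X) (shiftdeg (-1) (cd X))) rd.

(* the total differential  [[d,0,0],[v,-d,δ2],[δ1,0,r]] *)
Definition tot (X : Sc) : 'M[R]_(dimC X + dimC X + m) :=
  block_mx (block_mx (dd X) 0 (vv X) (- dd X)) (col_mx 0 (de2 X))
           (row_mx (de1 X) 0) (rr X).

Definition chi (X : Sc) : 'M[R]_(dimC X + dimC X + m) :=
  block_mx (block_mx 0 0 1%:M 0) 0 0 0.

Definition is_Scx (X : Sc) : Prop :=
  homog (-1) (tdeg X) (tdeg X) (tot X) /\ tot X *m tot X = 0.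

Definition is_Smorph {X Y : Sc} (F : 'M[R]_(dimC Y + dimC Y + m, dimC X + dimC X + m)) : Prop :=
  [/\ homog 0 (tdeg X) (tdeg Y) F, F *m tot X = tot Y *m F & F *m chi X = chi Y *m F].

Definition Shomotopic {X Y : Sc} (F G : 'M[R]_(dimC Y + dimC Y + m, dimC X + dimC X + m)) : Prop :=
  exists K : 'M[R]_(dimC Y + dimC Y + m, dimC X + dimC X + m),
    [/\ homog 1 (tdeg X) (tdeg Y) K,
        chi Y *m K + K *m chi X = 0 &
        tot Y *m K + K *m tot X = F - G].

Definition Sequiv (X Y : Sc) : Prop :=
  exists (F : 'M[R]_(dimC Y + dimC Y + m, dimC X + dimC X + m))
         (G : 'M[R]_(dimC X + dimC X + m, dimC Y + dimC Y + m)),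
    [/\ is_Smorph F, is_Smorph G,
        Shomotopic (G *m F) 1%:M & Shomotopic (F *m G) 1%:M].

Definition susp (X : Sc) : Sc :=
  @MkScx R m rd (dimC X + m)
    (catdeg (shiftdeg (-2) (cd X)) (shiftdeg (-1) rd))
    (block_mx (dd X) (- de2 X) 0 (- rr X))
    (block_mx (vv X) 0 (de1 X) 0)
    (row_mx 0 1%:M)
    (col_mx (vv X *m de2 X) (de1 X *m de2 X))
    (rr X).

Definition desusp (X : Sc) : Sc :=
  @MkScx R m rd (dimC X + m)
    (catdeg (shiftdeg 2 (cd X)) (shiftdeg 2 rd))
    (block_mx (dd X) 0 (de1 X) (rr X))
    (block_mx (vv X) (de2 X) 0 0)
    (row_mx (de1 X *m vv X) (de1 X *m de2 X))
    (col_mx 0 1%:M)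
    (rr X).

Definition suspn (z : int) (X : Sc) : Sc :=
  match z with
  | Posz k => iter k susp X
  | Negz k => iter k.+1 desusp X
  end.
End S.

(* Main.v *)
Require Import Defs.
From mathcomp Require Import all_boot all_order all_algebra.
From mathcomp Require Import ring zify.
Import GRing.Theory.
Local Open Scope ring_scope.


Section Hom.
Context {R : comPzRingType} {m : nat} (rd : 'I_m -> int).

Lemma homog_ext k l p (a a' : 'I_l -> int) (b b' : 'I_k -> int) (M : 'M[R]_(k, l)) :
  a =1 a' -> b =1 b' -> homog p a b M -> homog p a' b' M.
Proof. by move=> ea eb H i j /H; rewrite ea eb. Qed.

Lemma homog_p k l p q (a : 'I_l -> int) (b : 'I_k -> int) (M : 'M[R]_(k, l)) :
  p = q -> homog p a b M -> homog q a b M.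
Proof. by move=> ->. Qed.

Lemma homog0 k l p (a : 'I_l -> int) (b : 'I_k -> int) : homog p a b (0 : 'M[R]_(k, l)).
Proof. by move=> i j; rewrite mxE eqxx. Qed.

Lemma homog1 k (a : 'I_k -> int) : homog 0 a a (1%:M : 'M[R]_k).
Proof. move=> i j; rewrite mxE; case: (@eqP _ i j) => [->|_]; [by rewrite addr0 | by rewrite eqxx]. Qed.

Lemma homogD k l p (a : 'I_l -> int) (b : 'I_k -> int) (M N : 'M[R]_(k, l)) :
  homog p a b M -> homog p a b N -> homog p a b (M + N).
Proof.
move=> HM HN i j; rewrite mxE; have [Mz|/HM//] := eqVneq (M i j) 0.
rewrite Mz add0r; exact: HN.
Qed.

Lemma homogN k l p (a : 'I_l -> int) (b : 'I_k -> int) (M : 'M[R]_(k, l)) :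
  homog p a b M -> homog p a b (- M).
Proof. by move=> HM i j; rewrite mxE oppr_eq0; apply: HM. Qed.

Lemma homogB k l p (a : 'I_l -> int) (b : 'I_k -> int) (M N : 'M[R]_(k, l)) :
  homog p a b M -> homog p a b N -> homog p a b (M - N).
Proof. by move=> HM HN; apply: homogD => //; apply: homogN. Qed.

Lemma homogM k l n p q (a : 'I_l -> int) (b : 'I_k -> int) (c : 'I_n -> int)
  (M : 'M[R]_(k, l)) (N : 'M[R]_(n, k)) :
  homog p a b M -> homog q b c N -> homog (p + q) a c (N *m M).
Proof.
move=> HM HN i j; rewrite mxE => nz.
case: (pickP (fun x => N i x * M x j != 0)) => [x nzx|H]; last first.
  by move: nz; rewrite big1 ?eqxx // => x _; apply/eqP/negbFE/H.
have nN : N i x != 0 by apply: contraNneq nzx => ->; rewrite mul0r.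
have nM : M x j != 0 by apply: contraNneq nzx => ->; rewrite mulr0.
by rewrite (HN _ _ nN) (HM _ _ nM) addrA.
Qed.

Lemma homog_block n1 n2 k1 k2 p (a1 : 'I_n1 -> int) (a2 : 'I_n2 -> int) (b1 : 'I_k1 -> int)
  (b2 : 'I_k2 -> int) (A : 'M[R]_(k1, n1)) B C D :
  homog p a1 b1 A -> homog p a2 b1 B -> homog p a1 b2 C -> homog p a2 b2 D ->
  homog p (catdeg a1 a2) (catdeg b1 b2) (block_mx A B C D).
Proof.
move=> hA hB hC hD i j; rewrite /catdeg -[i]splitK -[j]splitK.
case: (split i) => i'; case: (split j) => j'; rewrite !unsplitK /=.
- by rewrite block_mxEul; apply: hA.
- by rewrite block_mxEur; apply: hB.
- by rewrite block_mxEdl; apply: hC.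
- by rewrite block_mxEdr; apply: hD.
Qed.

Lemma homog_row n1 n2 k p (a1 : 'I_n1 -> int) (a2 : 'I_n2 -> int) (b : 'I_k -> int)
  (A : 'M[R]_(k, n1)) B :
  homog p a1 b A -> homog p a2 b B -> homog p (catdeg a1 a2) b (row_mx A B).
Proof.
move=> hA hB i j; rewrite /catdeg -[j]splitK.
case: (split j) => j'; rewrite !unsplitK /=.
- by rewrite row_mxEl; apply: hA.
- by rewrite row_mxEr; apply: hB.
Qed.

Lemma homog_col n k1 k2 p (a : 'I_n -> int) (b1 : 'I_k1 -> int) (b2 : 'I_k2 -> int)
  (A : 'M[R]_(k1, n)) B :
  homog p a b1 A -> homog p a b2 B -> homog p a (catdeg b1 b2) (col_mx A B).
Proof.
move=> hA hB i j; rewrite /catdeg -[i]splitK.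
case: (split i) => i'; rewrite !unsplitK /=.
- by rewrite col_mxEu; apply: hA.
- by rewrite col_mxEd; apply: hB.
Qed.

Lemma homog_ul n1 n2 k1 k2 p (a1 : 'I_n1 -> int) (a2 : 'I_n2 -> int) (b1 : 'I_k1 -> int)
  (b2 : 'I_k2 -> int) (M : 'M[R]_(k1 + k2, n1 + n2)) :
  homog p (catdeg a1 a2) (catdeg b1 b2) M -> homog p a1 b1 (ulsubmx M).
Proof. move=> H i j; rewrite !mxE => /H; by rewrite /catdeg ?(unsplitK (inl _)) ?(unsplitK (inr _)). Qed.
Lemma homog_ur n1 n2 k1 k2 p (a1 : 'I_n1 -> int) (a2 : 'I_n2 -> int) (b1 : 'I_k1 -> int)
  (b2 : 'I_k2 -> int) (M : 'M[R]_(k1 + k2, n1 + n2)) :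
  homog p (catdeg a1 a2) (catdeg b1 b2) M -> homog p a2 b1 (ursubmx M).
Proof. move=> H i j; rewrite !mxE => /H; by rewrite /catdeg ?(unsplitK (inl _)) ?(unsplitK (inr _)). Qed.
Lemma homog_dl n1 n2 k1 k2 p (a1 : 'I_n1 -> int) (a2 : 'I_n2 -> int) (b1 : 'I_k1 -> int)
  (b2 : 'I_k2 -> int) (M : 'M[R]_(k1 + k2, n1 + n2)) :
  homog p (catdeg a1 a2) (catdeg b1 b2) M -> homog p a1 b2 (dlsubmx M).
Proof. move=> H i j; rewrite !mxE => /H; by rewrite /catdeg ?(unsplitK (inl _)) ?(unsplitK (inr _)). Qed.
Lemma homog_dr n1 n2 k1 k2 p (a1 : 'I_n1 -> int) (a2 : 'I_n2 -> int) (b1 : 'I_k1 -> int)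
  (b2 : 'I_k2 -> int) (M : 'M[R]_(k1 + k2, n1 + n2)) :
  homog p (catdeg a1 a2) (catdeg b1 b2) M -> homog p a2 b2 (drsubmx M).
Proof. move=> H i j; rewrite !mxE => /H; by rewrite /catdeg ?(unsplitK (inl _)) ?(unsplitK (inr _)). Qed.
Lemma homog_l n1 n2 k p (a1 : 'I_n1 -> int) (a2 : 'I_n2 -> int) (b : 'I_k -> int)
  (M : 'M[R]_(k, n1 + n2)) :
  homog p (catdeg a1 a2) b M -> homog p a1 b (lsubmx M).
Proof. move=> H i j; rewrite !mxE => /H; by rewrite /catdeg ?(unsplitK (inl _)) ?(unsplitK (inr _)). Qed.
Lemma homog_d n k1 k2 p (a : 'I_n -> int) (b1 : 'I_k1 -> int) (b2 : 'I_k2 -> int)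
  (M : 'M[R]_(k1 + k2, n)) :
  homog p a (catdeg b1 b2) M -> homog p a b2 (dsubmx M).
Proof. move=> H i j; rewrite !mxE => /H; by rewrite /catdeg ?(unsplitK (inl _)) ?(unsplitK (inr _)). Qed.

Lemma homog_sh k l p s t (a : 'I_l -> int) (b : 'I_k -> int) (M : 'M[R]_(k, l)) :
  homog (p - s + t) a b M -> homog p (shiftdeg s a) (shiftdeg t b) M.
Proof. move=> H i j /H; rewrite /shiftdeg => ->. lia. Qed.
Lemma homog_shl k l p s (a : 'I_l -> int) (b : 'I_k -> int) (M : 'M[R]_(k, l)) :
  homog (p - s) a b M -> homog p (shiftdeg s a) b M.
Proof. move=> H i j /H; rewrite /shiftdeg => ->. lia. Qed.
Lemma homog_shr k l p t (a : 'I_l -> int) (b : 'I_k -> int) (M : 'M[R]_(k, l)) :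
  homog (p + t) a b M -> homog p a (shiftdeg t b) M.
Proof. move=> H i j /H; rewrite /shiftdeg => ->. lia. Qed.
Lemma homog_unsh k l p s t (a : 'I_l -> int) (b : 'I_k -> int) (M : 'M[R]_(k, l)) :
  homog p (shiftdeg s a) (shiftdeg t b) M -> homog (p - s + t) a b M.
Proof. move=> H i j /H; rewrite /shiftdeg => E. lia. Qed.
Lemma homog_unshl k l p s (a : 'I_l -> int) (b : 'I_k -> int) (M : 'M[R]_(k, l)) :
  homog p (shiftdeg s a) b M -> homog (p - s) a b M.
Proof. move=> H i j /H; rewrite /shiftdeg => E. lia. Qed.
Lemma homog_unshr k l p t (a : 'I_l -> int) (b : 'I_k -> int) (M : 'M[R]_(k, l)) :
  homog p a (shiftdeg t b) M -> homog (p + t) a b M.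
Proof. move=> H i j /H; rewrite /shiftdeg => E. lia. Qed.
End Hom.

Section Blocks.
Context {R : comPzRingType} {m : nat}.

Definition mk {n1 n2 : nat} (f g : 'M[R]_(n2, n1)) (h : 'M[R]_(n2, m)) (k : 'M[R]_(m, n1))
  (l : 'M[R]_m) : 'M[R]_(n2 + n2 + m, n1 + n1 + m) :=
  block_mx (block_mx f 0 g f) (col_mx 0 h) (row_mx k 0) l.
Definition mkH {n1 n2 : nat} (f g : 'M[R]_(n2, n1)) (h : 'M[R]_(n2, m)) (k : 'M[R]_(m, n1))
  (l : 'M[R]_m) : 'M[R]_(n2 + n2 + m, n1 + n1 + m) :=
  block_mx (block_mx f 0 g (- f)) (col_mx 0 h) (row_mx k 0) l.

Lemma rc0 n1 n2 p1 p2 (a : 'M[R]_(n1, p1)) (b : 'M[R]_(n2, p1)) :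
  row_mx (col_mx a b) (0 : 'M_(n1 + n2, p2)) = block_mx a 0 b 0.
Proof. by rewrite -col_mx0 -block_mxEh. Qed.
Lemma cr0 n1 n2 p1 p2 (a : 'M[R]_(n1, p1)) (b : 'M[R]_(n1, p2)) :
  col_mx (row_mx a b) (0 : 'M_(n2, p1 + p2)) = block_mx a b 0 0.
Proof. by rewrite -row_mx0. Qed.
Lemma rc0' n1 n2 p1 p2 (a : 'M[R]_(n1, p2)) (b : 'M[R]_(n2, p2)) :
  row_mx (0 : 'M_(n1 + n2, p1)) (col_mx a b) = block_mx 0 a 0 b.
Proof. by rewrite -col_mx0 -block_mxEh. Qed.
Lemma cr0' n1 n2 p1 p2 (a : 'M[R]_(n2, p1)) (b : 'M[R]_(n2, p2)) :
  col_mx (0 : 'M_(n1, p1 + p2)) (row_mx a b) = block_mx 0 0 a b.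
Proof. by rewrite -row_mx0. Qed.

Ltac bsimp := repeat progress rewrite -?block_mxEh ?rc0 ?cr0 ?rc0' ?cr0' ?mulmx_block ?mul_mx_row ?mul_col_mx ?mul_row_col ?mul_col_row
  ?mul_row_block ?mul_block_col ?mulmx0 ?mul0mx ?mulmx1 ?mul1mx ?mulmxN ?mulNmx ?addr0 ?add0r ?oppr0 ?opprK
  ?row_mx0 ?col_mx0 ?block_mx0 -?block_mxEh ?add_block_mx ?add_col_mx ?add_row_mx ?opp_block_mx ?opp_row_mx ?opp_col_mx.

Lemma mk_mul n1 n2 n3 (f g : 'M[R]_(n2, n1)) h k l (f' g' : 'M[R]_(n3, n2)) h' k' l' :
  mk f' g' h' k' l' *m mk f g h k l =
  mk (f' *m f) (g' *m f + f' *m g + h' *m k) (f' *m h + h' *m l) (k' *m f + l' *m k) (l' *m l).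
Proof. by rewrite /mk; bsimp. Qed.

Lemma mk_mkH n1 n2 n3 (f g : 'M[R]_(n2, n1)) h k l (f' g' : 'M[R]_(n3, n2)) h' k' l' :
  mk f' g' h' k' l' *m mkH f g h k l =
  mkH (f' *m f) (g' *m f + f' *m g + h' *m k) (f' *m h + h' *m l) (k' *m f + l' *m k) (l' *m l).
Proof. by rewrite /mk /mkH; bsimp. Qed.

Lemma mkH_mk n1 n2 n3 (f g : 'M[R]_(n2, n1)) h k l (f' g' : 'M[R]_(n3, n2)) h' k' l' :
  mkH f' g' h' k' l' *m mk f g h k l =
  mkH (f' *m f) (g' *m f - f' *m g + h' *m k) (- (f' *m h) + h' *m l) (k' *m f + l' *m k) (l' *m l).
Proof. by rewrite /mk /mkH; bsimp. Qed.

Lemma mkH_mkH n1 n2 n3 (f g : 'M[R]_(n2, n1)) h k l (f' g' : 'M[R]_(n3, n2)) h' k' l' :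
  mkH f' g' h' k' l' *m mkH f g h k l =
  mk (f' *m f) (g' *m f - f' *m g + h' *m k) (- (f' *m h) + h' *m l) (k' *m f + l' *m k) (l' *m l).
Proof. by rewrite /mk /mkH; bsimp. Qed.

Lemma mk_add n1 n2 (f g : 'M[R]_(n2, n1)) h k l f' g' h' k' l' :
  mk f g h k l + mk f' g' h' k' l' = mk (f + f') (g + g') (h + h') (k + k') (l + l').
Proof. by rewrite /mk; bsimp. Qed.
Lemma mk_opp n1 n2 (f g : 'M[R]_(n2, n1)) h k l :
  - mk f g h k l = mk (- f) (- g) (- h) (- k) (- l).
Proof. by rewrite /mk; bsimp. Qed.
Lemma mkH_add n1 n2 (f g : 'M[R]_(n2, n1)) h k l f' g' h' k' l' :
  mkH f g h k l + mkH f' g' h' k' l' = mkH (f + f') (g + g') (h + h') (k + k') (l + l').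
Proof. by rewrite /mkH; bsimp; rewrite opprD. Qed.
Lemma mk1 n : 1%:M = mk (1%:M : 'M[R]_n) 0 0 0 1%:M.
Proof. by rewrite /mk !scalar_mx_block; bsimp. Qed.
Lemma mk0 n1 n2 : 0 = mk (0 : 'M[R]_(n2, n1)) 0 0 0 0.
Proof. by rewrite /mk; bsimp. Qed.

Definition cf {n1 n2} (F : 'M[R]_(n2 + n2 + m, n1 + n1 + m)) := ulsubmx (ulsubmx F).
Definition cg {n1 n2} (F : 'M[R]_(n2 + n2 + m, n1 + n1 + m)) := dlsubmx (ulsubmx F).
Definition ch {n1 n2} (F : 'M[R]_(n2 + n2 + m, n1 + n1 + m)) := dsubmx (ursubmx F).
Definition ck {n1 n2} (F : 'M[R]_(n2 + n2 + m, n1 + n1 + m)) := lsubmx (dlsubmx F).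
Definition cl {n1 n2} (F : 'M[R]_(n2 + n2 + m, n1 + n1 + m)) := drsubmx F.

Lemma mkK n1 n2 (f g : 'M[R]_(n2, n1)) h k l :
  [/\ cf (mk f g h k l) = f, cg (mk f g h k l) = g, ch (mk f g h k l) = h,
      ck (mk f g h k l) = k & cl (mk f g h k l) = l].
Proof.
by rewrite /cf /cg /ch /ck /cl /mk !block_mxKul block_mxKdl block_mxKur block_mxKdl
  block_mxKdr col_mxKd row_mxKl.
Qed.

Lemma mkHK n1 n2 (f g : 'M[R]_(n2, n1)) h k l :
  [/\ cf (mkH f g h k l) = f, cg (mkH f g h k l) = g, ch (mkH f g h k l) = h,
      ck (mkH f g h k l) = k & cl (mkH f g h k l) = l].
Proof.
by rewrite /cf /cg /ch /ck /cl /mkH !block_mxKul block_mxKdl block_mxKur block_mxKdl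
  block_mxKdr col_mxKd row_mxKl.
Qed.

Lemma mkH0 n1 n2 : 0 = mkH (0 : 'M[R]_(n2, n1)) 0 0 0 0.
Proof. by rewrite /mkH; bsimp. Qed.

Lemma mk_inj n1 n2 (f g : 'M[R]_(n2, n1)) h k l f' g' h' k' l' :
  mk f g h k l = mk f' g' h' k' l' -> [/\ f = f', g = g', h = h', k = k' & l = l'].
Proof.
move=> E; have := mkK _ _ f g h k l; rewrite E.
by case: (mkK _ _ f' g' h' k' l') => -> -> -> -> -> [].
Qed.

Lemma mkH_inj n1 n2 (f g : 'M[R]_(n2, n1)) h k l f' g' h' k' l' :
  mkH f g h k l = mkH f' g' h' k' l' -> [/\ f = f', g = g', h = h', k = k' & l = l'].
Proof.
rewrite /mkH => /eq_block_mx [/eq_block_mx [? _ ? _] /eq_col_mx [_ ?] /eq_row_mx [? _] ?].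
by split.
Qed.

Definition chiN n : 'M[R]_(n + n + m) := block_mx (block_mx 0 0 1%:M 0) 0 0 0.

Lemma chiNE n : chiN n = mk 0 1%:M 0 0 0.
Proof. by rewrite /chiN /mk; bsimp. Qed.

Lemma decomp n1 n2 (F : 'M[R]_(n2 + n2 + m, n1 + n1 + m)) :
  F *m chiN n1 = chiN n2 *m F -> F = mk (cf F) (cg F) (ch F) (ck F) (cl F).
Proof.
have E : F = block_mx (block_mx (cf F) (ursubmx (ulsubmx F)) (cg F) (drsubmx (ulsubmx F)))
   (col_mx (usubmx (ursubmx F)) (ch F)) (row_mx (ck F) (rsubmx (dlsubmx F))) (cl F).
  by rewrite /cf /cg /ch /ck /cl submxK vsubmxK hsubmxK submxK.
move: E; move: (cf F) (cg F) (ch F) (ck F) (cl F) => a c g h j.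
move: (ursubmx (ulsubmx F)) (drsubmx (ulsubmx F)) (usubmx (ursubmx F)) (rsubmx (dlsubmx F)) => b d e i ->.
rewrite /chiN /mk; bsimp.
case/eq_block_mx=> /eq_block_mx [-> _ -> _] /esym/eqP E1 /eqP E2 _.
move: E1 E2; rewrite col_mx_eq0 row_mx_eq0 => /andP[_ /eqP->] /andP[/eqP-> _].
done.
Qed.

Lemma decompH n1 n2 (F : 'M[R]_(n2 + n2 + m, n1 + n1 + m)) :
  chiN n2 *m F + F *m chiN n1 = 0 -> F = mkH (cf F) (cg F) (ch F) (ck F) (cl F).
Proof.
have E : F = block_mx (block_mx (cf F) (ursubmx (ulsubmx F)) (cg F) (drsubmx (ulsubmx F)))
   (col_mx (usubmx (ursubmx F)) (ch F)) (row_mx (ck F) (rsubmx (dlsubmx F))) (cl F).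
  by rewrite /cf /cg /ch /ck /cl submxK vsubmxK hsubmxK submxK.
move: E; move: (cf F) (cg F) (ch F) (ck F) (cl F) => a c g h j.
move: (ursubmx (ulsubmx F)) (drsubmx (ulsubmx F)) (usubmx (ursubmx F)) (rsubmx (dlsubmx F)) => b d e i ->.
rewrite /chiN /mkH; bsimp.
move/eqP; rewrite block_mx_eq0 => /and4P[]; rewrite block_mx_eq0 col_mx_eq0 row_mx_eq0.
case/and4P=> /eqP-> _ /eqP E3 _ /andP[_ /eqP->] /andP[/eqP-> _] _.
by rewrite -(addKr a d) E3 addr0.
Qed.
End Blocks.

Section HomMk.
Context {R : comPzRingType} {m : nat} (rd : 'I_m -> int).

Definition tdegN {n} (c : 'I_n -> int) := catdeg (catdeg c (shiftdeg (-1) c)) rd.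

Lemma homogM' k l n p q r (a : 'I_l -> int) (b : 'I_k -> int) (c : 'I_n -> int)
  (M : 'M[R]_(k, l)) (N : 'M[R]_(n, k)) :
  homog p a b M -> homog q b c N -> r = p + q -> homog r a c (N *m M).
Proof. move=> hM hN ->. have := homogM _ _ _ _ _ _ _ _ _ _ hM hN. exact. Qed.
Lemma homog1' k q (a : 'I_k -> int) : q = 0 -> homog q a a (1%:M : 'M[R]_k).
Proof. by move=> ->; apply: homog1. Qed.

Ltac hprod := first [ eassumption | apply: homog0 | (eapply homogM'; [hprod | hprod | reflexivity]) ].
Ltac hfin := first [ apply: homog0 | (apply: homog1'; lia) | (eapply homog_p; last eassumption); lia
  | (eapply homogM'; [hprod | hprod | lia]) ].
Ltac hstep := first [ apply: homog0 | apply: homog_block | apply: homog_row | apply: homog_col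
  | apply: homogN | apply: homogD | apply: homog_sh | apply: homog_shl | apply: homog_shr ].
Ltac hb := repeat hstep; try hfin.

Lemma homog_mk n1 n2 p (c1 : 'I_n1 -> int) (c2 : 'I_n2 -> int) (f g : 'M[R]_(n2, n1)) h k l :
  homog p c1 c2 f -> homog (p - 1) c1 c2 g -> homog (p - 1) rd c2 h -> homog p c1 rd k ->
  homog p rd rd l -> homog p (tdegN c1) (tdegN c2) (@mk R m n1 n2 f g h k l).
Proof. move=> *; rewrite /mk /tdegN; hb. Qed.

Lemma homog_mkH n1 n2 p (c1 : 'I_n1 -> int) (c2 : 'I_n2 -> int) (f g : 'M[R]_(n2, n1)) h k l :
  homog p c1 c2 f -> homog (p - 1) c1 c2 g -> homog (p - 1) rd c2 h -> homog p c1 rd k ->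
  homog p rd rd l -> homog p (tdegN c1) (tdegN c2) (@mkH R m n1 n2 f g h k l).
Proof. move=> *; rewrite /mkH /tdegN; hb. Qed.

Lemma homog_cmp n1 n2 p (c1 : 'I_n1 -> int) (c2 : 'I_n2 -> int) (F : 'M[R]_(n2 + n2 + m, n1 + n1 + m)) :
  homog p (tdegN c1) (tdegN c2) F ->
  [/\ homog p c1 c2 (cf F), homog (p - 1) c1 c2 (cg F), homog (p - 1) rd c2 (ch F),
      homog p c1 rd (ck F) & homog p rd rd (cl F)].
Proof.
rewrite /tdegN => H; split.
- by apply: homog_ul; apply: homog_ul; exact: H.
- apply: (homog_p _ _ (p + -1)); first lia.
  by apply: homog_unshr; apply: homog_dl; apply: homog_ul; exact: H.
- apply: (homog_p _ _ (p + -1)); first lia.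
  by apply: homog_unshr; apply: homog_d; apply: homog_ur; exact: H.
- by apply: homog_l; apply: homog_dl; exact: H.
- by apply: homog_dr; exact: H.
Qed.

Lemma tdegN_ext n (c c' : 'I_n -> int) : c =1 c' -> tdegN c =1 tdegN c'.
Proof.
move=> e i; rewrite /tdegN /catdeg /shiftdeg; case: (split i) => // j.
by case: (split j) => x; rewrite e.
Qed.
End HomMk.

Section Alg.
Context {R : comPzRingType} {m : nat}.

Lemma L1 {V : zmodType} {x y a b : V} : a = b -> x - y = a - b -> x = y.
Proof. by move=> -> /eqP; rewrite subrr subr_eq0 => /eqP. Qed.
Lemma L2 {V : zmodType} {x y a b a' b' : V} : a = b -> a' = b' -> x - y = (a - b) + (a' - b') -> x = y.
Proof. by move=> -> ->; rewrite !subrr addr0 => /eqP; rewrite subr_eq0 => /eqP. Qed.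
Lemma L3 {V : zmodType} {x y a b a' b' a'' b'' : V} : a = b -> a' = b' -> a'' = b'' ->
  x - y = (a - b) + (a' - b') + (a'' - b'') -> x = y.
Proof. by move=> -> -> ->; rewrite !subrr !addr0 => /eqP; rewrite subr_eq0 => /eqP. Qed.
Lemma L4 {V : zmodType} {x y a b a' b' a'' b'' a3 b3 : V} : a = b -> a' = b' -> a'' = b'' -> a3 = b3 ->
  x - y = (a - b) + (a' - b') + (a'' - b'') + (a3 - b3) -> x = y.
Proof. by move=> -> -> -> ->; rewrite !subrr !addr0 => /eqP; rewrite subr_eq0 => /eqP. Qed.

Definition relsM {n} (d v : 'M[R]_n) (b : 'M_(n, m)) (a : 'M_(m, n)) (r : 'M_m) :=
  [/\ d *m d = 0, v *m d - d *m v + b *m a = 0, - (d *m b) + b *m r = 0,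
      a *m d + r *m a = 0 & r *m r = 0].

Definition chainC {n1 n2} (d v : 'M[R]_n1) (b : 'M_(n1, m)) (a : 'M_(m, n1)) (r : 'M_m)
  (d' v' : 'M[R]_n2) (b' : 'M_(n2, m)) (a' : 'M_(m, n2)) (r' : 'M_m)
  (f g : 'M_(n2, n1)) (h : 'M_(n2, m)) (k : 'M_(m, n1)) (l : 'M_m) :=
  [/\ f *m d = d' *m f, g *m d + f *m v + h *m a = v' *m f - d' *m g + b' *m k,
      f *m b + h *m r = - (d' *m h) + b' *m l, k *m d + l *m a = a' *m f + r' *m k
    & l *m r = r' *m l].

Lemma chainP {n1 n2} (d v : 'M[R]_n1) b a r (d' v' : 'M[R]_n2) b' a' r' (f g : 'M_(n2, n1)) h k l :
  mk f g h k l *m mkH d v b a r = mkH d' v' b' a' r' *m mk f g h k l <->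
  chainC d v b a r d' v' b' a' r' f g h k l.
Proof.
rewrite mk_mkH mkH_mk; split.
  by case/mkH_inj=> *; split.
by case=> -> -> -> -> ->.
Qed.
End Alg.

Ltac mnorm := rewrite ?mulmxDl ?mulmxDr ?mulmxBl ?mulmxBr ?mulNmx ?mulmxN ?opprK
  ?mul0mx ?mulmx0 ?mul1mx ?mulmx1 -?mulmxA.
Ltac genprod := repeat match goal with |- context [?A *m ?B] => let x := fresh "x" in set x := (A *m B); clearbody x end.
Ltac zsolve := genprod; apply/matrixP=> ? ?; rewrite !mxE; ring.
Arguments decomp {R m n1 n2 F} _.
Arguments decompH {R m n1 n2 F} _.
Arguments homog_cmp {R m rd n1 n2 p c1 c2 F} _.
Arguments mk_inj {R m n1 n2 f g h k l f' g' h' k' l'} _.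
Arguments mkH_inj {R m n1 n2 f g h k l f' g' h' k' l'} _.
Arguments homogM {R k l n p q a b c M N} _ _.
Arguments homogD {R k l p a b M N} _ _.

Ltac bsimp := repeat progress rewrite -?block_mxEh ?rc0 ?cr0 ?rc0' ?cr0' ?mulmx_block ?mul_mx_row ?mul_col_mx ?mul_row_col ?mul_col_row
  ?mul_row_block ?mul_block_col ?mulmx0 ?mul0mx ?mulmx1 ?mul1mx ?mulmxN ?mulNmx ?addr0 ?add0r ?oppr0 ?opprK
  ?row_mx0 ?col_mx0 ?block_mx0 -?block_mxEh ?add_block_mx ?add_col_mx ?add_row_mx ?opp_block_mx ?opp_row_mx ?opp_col_mx.
Ltac beq0 := apply/eqP; rewrite ?block_mx_eq0 ?col_mx_eq0 ?row_mx_eq0; rewrite -?andbA; repeat (apply/andP; split); apply/eqP.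
Ltac hprod := first [ eassumption | apply: homog0 | (eapply homogM'; [hprod | hprod | reflexivity]) ].
Ltac hfin := first [ apply: homog0 | (apply: homog1'; lia) | (eapply homog_p; last eassumption); lia
  | (eapply homogM'; [hprod | hprod | lia]) ].
Ltac hstep := first [ apply: homog0 | apply: homog_block | apply: homog_row | apply: homog_col
  | apply: homogN | apply: homogD | apply: homog_sh | apply: homog_shl | apply: homog_shr ].
Ltac hb := repeat hstep; try hfin.


Section Sc.
Context {R : comPzRingType} {m : nat} {rd : 'I_m -> int}.
Local Notation Sc := (@Scx R m rd).

Lemma totE (X : Sc) : tot X = mkH (dd X) (vv X) (de2 X) (de1 X) (rr X). Proof. by []. Qed.
Lemma chiE (X : Sc) : chi X = mk 0 1%:M 0 0 0. Proof. exact: chiNE. Qed.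
Lemma tdegE (X : Sc) : tdeg X = tdegN rd (cd X). Proof. by []. Qed.

Definition hatoms (X : Sc) := [/\ homog (-1) (cd X) (cd X) (dd X), homog (-2) (cd X) (cd X) (vv X),
  homog (-2) rd (cd X) (de2 X), homog (-1) (cd X) rd (de1 X) & homog (-1) rd rd (rr X)].
Definition rels (X : Sc) := relsM (dd X) (vv X) (de2 X) (de1 X) (rr X).

Lemma ScxP (X : Sc) : is_Scx X -> rels X /\ hatoms X.
Proof.
case; rewrite tdegE totE => /homog_cmp; case: (mkHK _ _ (dd X) (vv X) (de2 X) (de1 X) (rr X)).
move=> -> -> -> -> -> [h1 h2 h3 h4 h5]; rewrite mkH_mkH (mk0 (dimC X) (dimC X)) => /mk_inj [*].
split; first by split.
split=> //; by apply: (homog_p _ _ (-1 - 1)).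
Qed.

Lemma ScxI (X : Sc) : rels X -> hatoms X -> is_Scx X.
Proof.
case=> r1 r2 r3 r4 r5 [a1 a2 a3 a4 a5]; split.
  by rewrite tdegE totE; apply: homog_mkH => //; apply: (homog_p _ _ (-2)).
by rewrite totE mkH_mkH (mk0 (dimC X) (dimC X)); congr mk.
Qed.

Definition chainX (X Y : Sc) f g h k l :=
  chainC (dd X) (vv X) (de2 X) (de1 X) (rr X) (dd Y) (vv Y) (de2 Y) (de1 Y) (rr Y) f g h k l.

Lemma mk_chi (X Y : Sc) (f g : 'M_(dimC Y, dimC X)) h k l :
  mk f g h k l *m chi X = chi Y *m mk f g h k l.
Proof. by rewrite !chiE !mk_mul; mnorm; rewrite ?addr0 ?add0r. Qed.

Lemma mkH_chi (X Y : Sc) (f g : 'M_(dimC Y, dimC X)) h k l :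
  chi Y *m mkH f g h k l + mkH f g h k l *m chi X = 0.
Proof.
rewrite !chiE mk_mkH mkH_mk mkH_add (mkH0 (dimC X) (dimC Y)); mnorm.
by congr mkH; rewrite ?addr0 ?add0r ?subrr ?oppr0 ?addNr.
Qed.

Lemma SmorphE (X Y : Sc) F : @is_Smorph R m rd X Y F ->
  [/\ F = mk (cf F) (cg F) (ch F) (ck F) (cl F), chainX X Y (cf F) (cg F) (ch F) (ck F) (cl F)
    & [/\ homog 0 (cd X) (cd Y) (cf F), homog (-1) (cd X) (cd Y) (cg F), homog (-1) rd (cd Y) (ch F),
      homog 0 (cd X) rd (ck F) & homog 0 rd rd (cl F)]].
Proof.
case=> hF cF xF; have FE := decomp xF.
split => //; first by apply/chainP; rewrite -FE.
by case: (homog_cmp hF) => *; split => //; apply: (homog_p _ _ (0 - 1)).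
Qed.

Lemma SmorphI (X Y : Sc) (f g : 'M_(dimC Y, dimC X)) h k l : chainX X Y f g h k l ->
  homog 0 (cd X) (cd Y) f -> homog (-1) (cd X) (cd Y) g -> homog (-1) rd (cd Y) h ->
  homog 0 (cd X) rd k -> homog 0 rd rd l -> @is_Smorph R m rd X Y (mk f g h k l).
Proof.
move=> c *; split; last exact: mk_chi; last exact/chainP.
by rewrite !tdegE; apply: homog_mk => //; apply: (homog_p _ _ (-1)).
Qed.

Lemma ShomE (X Y : Sc) K : homog 1 (tdeg X) (tdeg Y) K -> chi Y *m K + K *m chi X = 0 ->
  K = mkH (cf K) (cg K) (ch K) (ck K) (cl K) /\
    [/\ homog 1 (cd X) (cd Y) (cf K), homog 0 (cd X) (cd Y) (cg K), homog 0 rd (cd Y) (ch K),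
      homog 1 (cd X) rd (ck K) & homog 1 rd rd (cl K)].
Proof.
move=> hK xK; split; first exact: decompH.
by case: (homog_cmp hK) => *; split => //; apply: (homog_p _ _ (1 - 1)).
Qed.

Lemma homotE (X Y : Sc) (p q : 'M_(dimC Y, dimC X)) s t u :
  tot Y *m mkH p q s t u + mkH p q s t u *m tot X =
  mk (dd Y *m p + p *m dd X)
     (vv Y *m p - dd Y *m q + de2 Y *m t + (q *m dd X - p *m vv X + s *m de1 X))
     (- (dd Y *m s) + de2 Y *m u + (- (p *m de2 X) + s *m rr X))
     (de1 Y *m p + rr Y *m t + (t *m dd X + u *m de1 X))
     (rr Y *m u + u *m rr X).
Proof. by rewrite !totE !mkH_mkH mk_add. Qed.

Lemma ShomI (X Y : Sc) (F G : 'M_(dimC Y + dimC Y + m, dimC X + dimC X + m)) (p q : 'M_(dimC Y, dimC X)) s t u :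
  homog 1 (cd X) (cd Y) p -> homog 0 (cd X) (cd Y) q -> homog 0 rd (cd Y) s ->
  homog 1 (cd X) rd t -> homog 1 rd rd u ->
  tot Y *m mkH p q s t u + mkH p q s t u *m tot X = F - G -> @Shomotopic R m rd X Y F G.
Proof.
move=> *; exists (mkH p q s t u); split => //; last exact: mkH_chi.
by rewrite !tdegE; apply: homog_mkH => //; apply: (homog_p _ _ 0).
Qed.

Lemma morph_comp {X Y Z : Sc} {F G} : @is_Smorph R m rd X Y F -> @is_Smorph R m rd Y Z G ->
  is_Smorph (G *m F).
Proof.
case=> hF cF xF [hG cG xG]; split.
- by apply: (homog_p _ _ (0 + 0)) => //; apply: homogM hF hG.
- by rewrite -mulmxA cF !mulmxA cG.
- by rewrite -mulmxA xF !mulmxA xG.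
Qed.

Lemma morph1 (X : Sc) : @is_Smorph R m rd X X 1%:M.
Proof. by split; [apply: homog1 | rewrite mulmx1 mul1mx | rewrite mulmx1 mul1mx]. Qed.

Lemma Shom_refl (X Y : Sc) F : @Shomotopic R m rd X Y F F.
Proof.
exists 0; split; first exact: homog0.
- by rewrite mulmx0 mul0mx addr0.
- by rewrite mulmx0 mul0mx addr0 subrr.
Qed.

Lemma Shom_trans {X Y : Sc} {A B C} : @Shomotopic R m rd X Y A B -> Shomotopic B C -> Shomotopic A C.
Proof.
case=> K [hK xK eK] [K' [hK' xK' eK']]; exists (K + K'); split.
- exact: homogD.
- by rewrite mulmxDr mulmxDl addrACA xK xK' addr0.
- by rewrite mulmxDr mulmxDl addrACA eK eK' addrA subrK.
Qed.

Lemma Shom_comp {X' X Y Y' : Sc} {A B F G} : @Shomotopic R m rd X Y A B ->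
  @is_Smorph R m rd X' X F -> @is_Smorph R m rd Y Y' G ->
  Shomotopic (G *m A *m F) (G *m B *m F).
Proof.
case=> K [hK xK eK] [hF cF xF] [hG cG xG]; exists (G *m K *m F); split.
- apply: (homog_p _ _ (0 + (1 + 0))); first by [].
  apply: homogM hF _; apply: homogM hK hG.
- have -> : chi Y' *m (G *m K *m F) = G *m (chi Y *m K) *m F by rewrite !mulmxA xG.
  have -> : G *m K *m F *m chi X' = G *m (K *m chi X) *m F by rewrite -!mulmxA xF.
  by rewrite -mulmxDl -mulmxDr xK mulmx0 mul0mx.
- have -> : tot Y' *m (G *m K *m F) = G *m (tot Y *m K) *m F by rewrite !mulmxA cG.
  have -> : G *m K *m F *m tot X' = G *m (K *m tot X) *m F by rewrite -!mulmxA cF.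
  by rewrite -mulmxDl -mulmxDr eK mulmxBr mulmxBl.
Qed.

Lemma Sequiv_refl (X : Sc) : Sequiv X X.
Proof.
exists 1%:M, 1%:M; split; try exact: morph1; rewrite mulmx1; exact: Shom_refl.
Qed.

Lemma Sequiv_sym (X Y : Sc) : Sequiv X Y -> Sequiv Y X.
Proof. by case=> F [G [? ? ? ?]]; exists G, F; split. Qed.

Lemma Sequiv_trans (X Y Z : Sc) : Sequiv X Y -> Sequiv Y Z -> Sequiv X Z.
Proof.
case=> F [G [mF mG h1 h2]] [F' [G' [mF' mG' h1' h2']]].
exists (F' *m F), (G *m G'); split; try exact: morph_comp.
- have := Shom_comp h1' mF mG; rewrite mulmx1 => H.
  eapply Shom_trans; last exact: h1.
  by rewrite !mulmxA; move: H; rewrite !mulmxA.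
- have := Shom_comp h2 mG' mF'; rewrite mulmx1 => H.
  eapply Shom_trans; last exact: h2'.
  by rewrite !mulmxA; move: H; rewrite !mulmxA.
Qed.
End Sc.
Arguments SmorphE {R m rd X Y F} _.
Arguments ShomE {R m rd X Y K} _ _.

Section S.
Context {R : comPzRingType} {m : nat}.
Lemma susp_relsM n (d v : 'M[R]_n) (b : 'M_(n, m)) a r : relsM d v b a r ->
  relsM (block_mx d (-b) 0 (-r)) (block_mx v 0 a 0) (col_mx (v *m b) (a *m b)) (row_mx 0 1%:M) r.
Proof.
case=> d2 vd db ad r2; split; bsimp.
- by beq0.
- beq0; [by apply: (L1 vd); zsolve | by zsolve | by [] | by zsolve].
- beq0.
  + by apply: (L2 (congr1 (mulmx^~ b) vd) (congr1 (mulmx v) db)); mnorm; zsolve.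
  + by apply: (L2 (congr1 (mulmx^~ b) ad) (congr1 (mulmx a) db)); mnorm; zsolve.
- by rewrite addNr row_mx0.
- by [].
Qed.
Lemma desusp_relsM n (d v : 'M[R]_n) (b : 'M_(n, m)) a r : relsM d v b a r ->
  relsM (block_mx d 0 a r) (block_mx v b 0 0) (col_mx 0 1%:M) (row_mx (a *m v) (a *m b)) r.
Proof.
case=> d2 vd db ad r2; split; bsimp.
- by beq0.
- beq0; [by apply: (L1 vd); zsolve | by apply: (L1 db); zsolve | by zsolve | by zsolve].
- by rewrite addNr col_mx0.
- beq0.
  + by apply: (L2 (congr1 (mulmx a) vd) (congr1 (mulmx^~ v) ad)); mnorm; zsolve.
  + by apply: (L2 (congr1 (mulmx a) db) (congr1 (mulmx^~ b) ad)); mnorm; zsolve.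
- by [].
Qed.

Definition homc {n1 n2} (d v : 'M[R]_n1) (b : 'M_(n1, m)) (a : 'M_(m, n1)) (r : 'M_m)
  (d' v' : 'M[R]_n2) (b' : 'M_(n2, m)) (a' : 'M_(m, n2)) (r' : 'M_m)
  (p q : 'M_(n2, n1)) (s : 'M_(n2, m)) (t : 'M_(m, n1)) (u : 'M_m) :=
  mk (d' *m p + p *m d) (v' *m p - d' *m q + b' *m t + (q *m d - p *m v + s *m a))
     (- (d' *m s) + b' *m u + (- (p *m b) + s *m r)) (a' *m p + r' *m t + (t *m d + u *m a))
     (r' *m u + u *m r).

Definition SFmat {n1 n2} (b : 'M[R]_(n1, m)) (v' : 'M[R]_n2) (a' : 'M_(m, n2))
  (f g : 'M_(n2, n1)) (h : 'M_(n2, m)) (k : 'M_(m, n1)) (l : 'M_m) :=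
  mk (block_mx f h 0 l) (block_mx g 0 k 0) (col_mx (g *m b + v' *m h) (k *m b + a' *m h)) 0 l.

Definition Sdat_d {n} (d : 'M[R]_n) (b : 'M_(n, m)) (r : 'M_m) := block_mx d (-b) 0 (-r).
Definition Sdat_v {n} (v : 'M[R]_n) (a : 'M_(m, n)) := block_mx v 0 a (0 : 'M_m).
Definition Sdat_b {n} (v : 'M[R]_n) (b : 'M_(n, m)) (a : 'M_(m, n)) := col_mx (v *m b) (a *m b).
Definition Sdat_a n : 'M[R]_(m, n + m) := row_mx 0 1%:M.

Lemma SK_hom n1 n2 (d v : 'M[R]_n1) (b : 'M_(n1, m)) a r (d' v' : 'M[R]_n2) (b' : 'M_(n2, m)) a' r'
   (p q : 'M_(n2, n1)) s t u :
  relsM d v b a r -> relsM d' v' b' a' r' ->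
  SFmat b v' a' (d' *m p + p *m d) (v' *m p - d' *m q + b' *m t + (q *m d - p *m v + s *m a))
     (- (d' *m s) + b' *m u + (- (p *m b) + s *m r)) (a' *m p + r' *m t + (t *m d + u *m a))
     (r' *m u + u *m r)
  = homc (Sdat_d d b r) (Sdat_v v a) (Sdat_b v b a) (Sdat_a n1) r
         (Sdat_d d' b' r') (Sdat_v v' a') (Sdat_b v' b' a') (Sdat_a n2) r'
         (block_mx p (-s) 0 (-u)) (block_mx q 0 t 0) (col_mx (v' *m s + q *m b) (a' *m s + t *m b)) 0 u.
Proof.
case=> d2 vd db ad r2 [d2' vd' db' ad' r2'].
rewrite /SFmat /homc /Sdat_d /Sdat_v /Sdat_b /Sdat_a; congr mk; bsimp.
- by [].
- by congr block_mx; zsolve.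
- congr col_mx.
  + by apply: (L2 (esym (congr1 (mulmx q) db)) (esym (congr1 (mulmx^~ s) vd'))); mnorm; zsolve.
  + by apply: (L2 (esym (congr1 (mulmx t) db)) (esym (congr1 (mulmx^~ s) ad'))); mnorm; zsolve.
- by rewrite addNr row_mx0.
Qed.
Lemma SF_chain n1 n2 (d v : 'M[R]_n1) (b : 'M_(n1, m)) a r (d' v' : 'M[R]_n2) (b' : 'M_(n2, m)) a' r' (f g : 'M_(n2, n1)) h k l :
  relsM d v b a r -> relsM d' v' b' a' r' -> chainC d v b a r d' v' b' a' r' f g h k l ->
  chainC (block_mx d (-b) 0 (-r)) (block_mx v 0 a 0) (col_mx (v *m b) (a *m b)) (row_mx 0 1%:M) r
         (block_mx d' (-b') 0 (-r')) (block_mx v' 0 a' 0) (col_mx (v' *m b') (a' *m b')) (row_mx 0 1%:M) r'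
         (block_mx f h 0 l) (block_mx g 0 k 0) (col_mx (g *m b + v' *m h) (k *m b + a' *m h)) 0 l.
Proof.
case=> d2 vd db ad r2 [d2' vd' db' ad' r2'] [M1 M2 M3 M4 M5].
split; bsimp.
- congr block_mx => //.
  + by apply: (L1 (esym M3)); mnorm; zsolve.
  + by rewrite M5.
- congr block_mx => //.
  + by apply: (L1 M2); mnorm; zsolve.
  + by zsolve.
  + by zsolve.
- congr col_mx.
  + apply: (L4 (congr1 (mulmx^~ b) M2) (congr1 (mulmx v') M3) (congr1 (mulmx g) db)
      (esym (congr1 (mulmx^~ h) vd'))); mnorm; zsolve.
  + apply: (L4 (congr1 (mulmx^~ b) M4) (congr1 (mulmx a') M3) (congr1 (mulmx k) db)
      (esym (congr1 (mulmx^~ h) ad'))); mnorm; zsolve.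
- by bsimp.
- exact: M5.
Qed.

Lemma nullS n1 n2 (d : 'M[R]_n1) (b : 'M_(n1, m)) r (d' : 'M[R]_n2) (b' : 'M_(n2, m)) r'
  (al : 'M_(n2, m)) (be : 'M_m) (hD : 'M_(n2 + m, m)) :
  block_mx 0 al 0 be *m Sdat_d d b r + hD *m Sdat_a n1 = - (Sdat_d d' b' r' *m block_mx 0 al 0 be) ->
  hD = - (Sdat_d d' b' r' *m col_mx al be) + col_mx al be *m r.
Proof.
rewrite -[hD]vsubmxK /Sdat_d /Sdat_a; move: (usubmx hD) (dsubmx hD) => h1 h2.
bsimp; case/eq_block_mx=> _ E1 _ E2; congr col_mx.
- by apply: (L1 E1); zsolve.
- by apply: (L1 E2); zsolve.
Qed.

Lemma SFmatB n1 n2 (b : 'M[R]_(n1, m)) (v' : 'M[R]_n2) (a' : 'M_(m, n2)) (f g : 'M_(n2, n1)) h k l f' g' h' k' l' :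
  SFmat b v' a' f g h k l - SFmat b v' a' f' g' h' k' l' =
  SFmat b v' a' (f - f') (g - g') (h - h') (k - k') (l - l').
Proof.
rewrite /SFmat mk_opp mk_add; congr mk; bsimp => //.
by congr col_mx; mnorm; zsolve.
Qed.
End S.

Section Sc.
Context {R : comPzRingType} {m : nat} {rd : 'I_m -> int}.
Local Notation Sc := (@Scx R m rd).

Lemma susp_Scx (X : Sc) : is_Scx X -> is_Scx (susp X).
Proof.
case/ScxP=> rX [h1 h2 h3 h4 h5]; apply: ScxI; first exact: susp_relsM.
by rewrite /hatoms /=; split; hb.
Qed.

Lemma desusp_Scx (X : Sc) : is_Scx X -> is_Scx (desusp X).
Proof.
case/ScxP=> rX [h1 h2 h3 h4 h5]; apply: ScxI; first exact: desusp_relsM.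
by rewrite /hatoms /=; split; hb.
Qed.
End Sc.

Section SD.
Context {R : comPzRingType} {m : nat}.
Definition Ddat_d {n} (d : 'M[R]_n) (a : 'M_(m, n)) (r : 'M_m) := block_mx d 0 a r.
Definition Ddat_v {n} (v : 'M[R]_n) (b : 'M_(n, m)) := block_mx v b 0 (0 : 'M_m).
Definition Ddat_b n : 'M[R]_(n + m, m) := col_mx 0 1%:M.
Definition Ddat_a {n} (v : 'M[R]_n) (b : 'M_(n, m)) (a : 'M_(m, n)) := row_mx (a *m v) (a *m b).
Definition DFmat {n1 n2} (v : 'M[R]_n1) (b : 'M[R]_(n1, m)) (a' : 'M_(m, n2))
  (f g : 'M_(n2, n1)) (h : 'M_(n2, m)) (k : 'M_(m, n1)) (l : 'M_m) :=
  mk (block_mx f 0 k l) (block_mx g h 0 0) 0 (row_mx (k *m v + a' *m g) (k *m b + a' *m h)) l.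

Lemma DF_chain n1 n2 (d v : 'M[R]_n1) (b : 'M_(n1, m)) a r (d' v' : 'M[R]_n2) (b' : 'M_(n2, m)) a' r' (f g : 'M_(n2, n1)) h k l :
  relsM d v b a r -> relsM d' v' b' a' r' -> chainC d v b a r d' v' b' a' r' f g h k l ->
  chainC (Ddat_d d a r) (Ddat_v v b) (Ddat_b n1) (Ddat_a v b a) r
         (Ddat_d d' a' r') (Ddat_v v' b') (Ddat_b n2) (Ddat_a v' b' a') r'
         (block_mx f 0 k l) (block_mx g h 0 0) 0 (row_mx (k *m v + a' *m g) (k *m b + a' *m h)) l.
Proof.
case=> d2 vd db ad r2 [d2' vd' db' ad' r2'] [M1 M2 M3 M4 M5].
rewrite /Ddat_d /Ddat_v /Ddat_b /Ddat_a.
split; bsimp.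
- by congr block_mx.
- congr block_mx.
  + by apply: (L1 M2); mnorm; zsolve.
  + by apply: (L1 M3); mnorm; zsolve.
  + by zsolve.
  + by zsolve.
- by [].
- congr row_mx.
  + by apply: (L4 (congr1 (mulmx^~ v) M4) (congr1 (mulmx a') M2) (congr1 (mulmx k) vd)
      (esym (congr1 (mulmx^~ g) ad'))); mnorm; zsolve.
  + by apply: (L4 (congr1 (mulmx^~ b) M4) (congr1 (mulmx a') M3) (congr1 (mulmx k) db)
      (esym (congr1 (mulmx^~ h) ad'))); mnorm; zsolve.
- exact: M5.
Qed.

Lemma DK_hom n1 n2 (d v : 'M[R]_n1) (b : 'M_(n1, m)) a r (d' v' : 'M[R]_n2) (b' : 'M_(n2, m)) a' r'
   (p q : 'M_(n2, n1)) s t u :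
  relsM d v b a r -> relsM d' v' b' a' r' ->
  DFmat v b a' (d' *m p + p *m d) (v' *m p - d' *m q + b' *m t + (q *m d - p *m v + s *m a))
     (- (d' *m s) + b' *m u + (- (p *m b) + s *m r)) (a' *m p + r' *m t + (t *m d + u *m a))
     (r' *m u + u *m r)
  = homc (Ddat_d d a r) (Ddat_v v b) (Ddat_b n1) (Ddat_a v b a) r
         (Ddat_d d' a' r') (Ddat_v v' b') (Ddat_b n2) (Ddat_a v' b' a') r'
         (block_mx p 0 t u) (block_mx q s 0 0) 0 (row_mx (t *m v + a' *m q) (t *m b + a' *m s)) u.
Proof.
case=> d2 vd db ad r2 [d2' vd' db' ad' r2'].
rewrite /DFmat /homc /Ddat_d /Ddat_v /Ddat_b /Ddat_a; congr mk; bsimp.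
- by [].
- by congr block_mx; zsolve.
- by rewrite subrr col_mx0.
- congr row_mx.
  + by apply: (L2 (esym (congr1 (mulmx^~ q) ad')) (esym (congr1 (mulmx t) vd))); mnorm; zsolve.
  + by apply: (L2 (esym (congr1 (mulmx t) db)) (esym (congr1 (mulmx^~ s) ad'))); mnorm; zsolve.
Qed.

Lemma nullD n1 n2 (d : 'M[R]_n1) (a : 'M_(m, n1)) r (d' : 'M[R]_n2) (a' : 'M_(m, n2)) r'
  (z1 : 'M_(m, n1)) (z2 : 'M_m) (kD : 'M_(m, n1 + m)) :
  block_mx 0 0 z1 z2 *m Ddat_d d a r = - (Ddat_d d' a' r' *m block_mx 0 0 z1 z2) + Ddat_b n2 *m kD ->
  kD = r' *m row_mx z1 z2 + row_mx z1 z2 *m Ddat_d d a r.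
Proof.
rewrite -[kD]hsubmxK /Ddat_d /Ddat_b; move: (lsubmx kD) (rsubmx kD) => k1 k2.
bsimp; case/eq_block_mx=> _ _ E1 E2; congr row_mx.
- by apply: (L1 (esym E1)); zsolve.
- by apply: (L1 (esym E2)); zsolve.
Qed.

Lemma DFmatB n1 n2 (v : 'M[R]_n1) (b : 'M[R]_(n1, m)) (a' : 'M_(m, n2)) (f g : 'M_(n2, n1)) h k l f' g' h' k' l' :
  DFmat v b a' f g h k l - DFmat v b a' f' g' h' k' l' =
  DFmat v b a' (f - f') (g - g') (h - h') (k - k') (l - l').
Proof.
rewrite /DFmat mk_opp mk_add; congr mk; bsimp => //.
by congr row_mx; mnorm; zsolve.
Qed.


End SD.


Section SuspF.
Context {R : comPzRingType} {m : nat} {rd : 'I_m -> int}.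
Local Notation Sc := (@Scx R m rd).

Lemma cmpB n1 n2 (F G : 'M[R]_(n2 + n2 + m, n1 + n1 + m)) :
  [/\ cf (F - G) = cf F - cf G, cg (F - G) = cg F - cg G, ch (F - G) = ch F - ch G,
      ck (F - G) = ck F - ck G & cl (F - G) = cl F - cl G].
Proof. by split; apply/matrixP=> i j; rewrite !mxE. Qed.

Section CM.
Variables (n1 n2 : nat) (f g : 'M[R]_(n2, n1)) (h : 'M[R]_(n2, m)) (k : 'M[R]_(m, n1)) (l : 'M[R]_m).
Lemma cf_mk : cf (mk f g h k l) = f. Proof. by case: (mkK _ _ f g h k l). Qed.
Lemma cg_mk : cg (mk f g h k l) = g. Proof. by case: (mkK _ _ f g h k l). Qed.
Lemma ch_mk : ch (mk f g h k l) = h. Proof. by case: (mkK _ _ f g h k l). Qed.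
Lemma ck_mk : ck (mk f g h k l) = k. Proof. by case: (mkK _ _ f g h k l). Qed.
Lemma cl_mk : cl (mk f g h k l) = l. Proof. by case: (mkK _ _ f g h k l). Qed.
End CM.

Definition SFc (X Y : Sc) (f g : 'M_(dimC Y, dimC X)) h k l :
  'M[R]_(dimC (susp Y) + dimC (susp Y) + m, dimC (susp X) + dimC (susp X) + m) :=
  SFmat (de2 X) (vv Y) (de1 Y) f g h k l.
Definition SFm (X Y : Sc) (F : 'M[R]_(dimC Y + dimC Y + m, dimC X + dimC X + m)) :=
  SFc X Y (cf F) (cg F) (ch F) (ck F) (cl F).

Lemma SFm_mk (X Y : Sc) (f g : 'M_(dimC Y, dimC X)) h k l : SFm X Y (mk f g h k l) = SFc X Y f g h k l.
Proof. by rewrite /SFm; case: (mkK _ _ f g h k l) => -> -> -> -> ->. Qed.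

Lemma SFcI (X Y : Sc) (f g : 'M_(dimC Y, dimC X)) h k l : is_Scx X -> is_Scx Y ->
  is_Smorph (mk f g h k l) -> is_Smorph (SFc X Y f g h k l).
Proof.
case/ScxP=> rX [x1 x2 x3 x4 x5] /ScxP [rY [y1 y2 y3 y4 y5]].
case/SmorphE; case: (mkK _ _ f g h k l) => -> -> -> -> -> _ cF [hf hg hh hk hl].
apply: SmorphI; first exact: SF_chain.
all: rewrite /=; hb.
Qed.

Lemma SF_morph {X Y : Sc} {F} : is_Scx X -> is_Scx Y -> is_Smorph F -> is_Smorph (SFm X Y F).
Proof. move=> sX sY mF; have [FE _ _] := SmorphE mF; rewrite /SFm; apply: SFcI => //; by rewrite -FE. Qed.

Lemma SF_one (X : Sc) : SFm X X 1%:M = 1%:M.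
Proof.
rewrite mk1 SFm_mk /SFc /SFmat [RHS]mk1; congr mk; bsimp => //; by rewrite -scalar_mx_block.
Qed.

Lemma SF_hom (X Y : Sc) F G : is_Scx X -> is_Scx Y -> Shomotopic F G ->
  Shomotopic (SFm X Y F) (SFm X Y G).
Proof.
case/ScxP=> rX [x1 x2 x3 x4 x5] /ScxP [rY [y1 y2 y3 y4 y5]].
case=> K [hK xK eK]; case: (ShomE hK xK) => KE hc.
move: KE hc eK; move: (cf K) (cg K) (ch K) (ck K) (cl K) => p q s t u -> [hp hq hs ht hu].
rewrite homotE => eK.
apply: (ShomI (susp X) (susp Y) _ _ (block_mx p (-s) 0 (-u)) (block_mx q 0 t 0)
   (col_mx (vv Y *m s + q *m de2 X) (de1 Y *m s + t *m de2 X)) 0 u).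
1-5: rewrite /=; hb.
rewrite /SFm /SFc SFmatB.
case: (cmpB _ _ F G) => <- <- <- <- <-; rewrite -eK.
case: (mkK _ _ (dd Y *m p + p *m dd X)
     (vv Y *m p - dd Y *m q + de2 Y *m t + (q *m dd X - p *m vv X + s *m de1 X))
     (- (dd Y *m s) + de2 Y *m u + (- (p *m de2 X) + s *m rr X))
     (de1 Y *m p + rr Y *m t + (t *m dd X + u *m de1 X))
     (rr Y *m u + u *m rr X)) => -> -> -> -> ->.
rewrite SK_hom //.
by rewrite homotE.
Qed.

Lemma SF_comp (X Y Z : Sc) F G : is_Scx X -> is_Scx Y -> is_Scx Z ->
  @is_Smorph R m rd X Y F -> @is_Smorph R m rd Y Z G ->
  Shomotopic (SFm Y Z G *m SFm X Y F) (SFm X Z (G *m F)).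
Proof.
move=> sX sY sZ mF mG.
have mA := morph_comp (SF_morph sX sY mF) (SF_morph sY sZ mG).
have mB := SF_morph sX sZ (morph_comp mF mG).
case/ScxP: sX => rX [x1 x2 x3 x4 x5]; case/ScxP: sY => rY [y1 y2 y3 y4 y5].
case/ScxP: sZ => rZ [z1 z2 z3 z4 z5].
case: (SmorphE mF) => FE _ hcF; case: (SmorphE mG) => GE _ hcG.
move: FE mA mB hcF; move: (cf F) (cg F) (ch F) (ck F) (cl F) => f g h k l -> mA mB [hf hg hh hk hl].
move: GE mA mB hcG; move: (cf G) (cg G) (ch G) (ck G) (cl G) => f' g' h' k' l' -> mA mB [hf' hg' hh' hk' hl'].
move: mA mB; rewrite mk_mul !SFm_mk.
set A := SFc Y Z _ _ _ _ _ *m _; set B := SFc X Z _ _ _ _ _ => mA mB.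
have xD : (A - B) *m chi (susp X) = chi (susp Z) *m (A - B).
  by case: mA => _ _ xA; case: mB => _ _ xB; rewrite mulmxBl mulmxBr xA xB.
have cD : (A - B) *m tot (susp X) = tot (susp Z) *m (A - B).
  by case: mA => _ cA _; case: mB => _ cB _; rewrite mulmxBl mulmxBr cA cB.
have DE := decomp xD.
have e1 : cf (A - B) = 0.
  by rewrite /A /B /SFc /SFmat mk_mul mk_opp mk_add cf_mk; bsimp; rewrite !subrr block_mx0.
have e2 : cg (A - B) = block_mx 0 (g' *m h) 0 (k' *m h).
  by rewrite /A /B /SFc /SFmat mk_mul mk_opp mk_add cg_mk; bsimp; congr block_mx; zsolve.
have e4 : ck (A - B) = 0.
  by rewrite /A /B /SFc /SFmat mk_mul mk_opp mk_add ck_mk; bsimp.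
have e5 : cl (A - B) = 0.
  by rewrite /A /B /SFc /SFmat mk_mul mk_opp mk_add cl_mk; bsimp; rewrite subrr.
rewrite e1 e2 e4 e5 in DE.
move: cD; rewrite DE !totE => /chainP [_ M2 _ _ _].
have hDE : ch (A - B) = - (Sdat_d (dd Z) (de2 Z) (rr Z) *m col_mx (g' *m h) (k' *m h))
    + col_mx (g' *m h) (k' *m h) *m rr X.
  apply: nullS; move: M2; rewrite ?mul0mx ?mulmx0 ?addr0 ?add0r ?sub0r => M2'; exact: M2'.
apply: (ShomI (susp X) (susp Z) A B 0 0 (col_mx (g' *m h) (k' *m h)) 0 0).
1-5: rewrite /=; hb.
rewrite homotE DE hDE; congr mk; rewrite ?(mulmx0, mul0mx, addr0, add0r, subr0, sub0r, oppr0) //.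
by rewrite /=; bsimp.
Qed.
End SuspF.


Section DesuspF.
Context {R : comPzRingType} {m : nat} {rd : 'I_m -> int}.
Local Notation Sc := (@Scx R m rd).

Definition DFc (X Y : Sc) (f g : 'M_(dimC Y, dimC X)) h k l :
  'M[R]_(dimC (desusp Y) + dimC (desusp Y) + m, dimC (desusp X) + dimC (desusp X) + m) :=
  DFmat (vv X) (de2 X) (de1 Y) f g h k l.
Definition DFm (X Y : Sc) (F : 'M[R]_(dimC Y + dimC Y + m, dimC X + dimC X + m)) :=
  DFc X Y (cf F) (cg F) (ch F) (ck F) (cl F).

Lemma DFm_mk (X Y : Sc) (f g : 'M_(dimC Y, dimC X)) h k l : DFm X Y (mk f g h k l) = DFc X Y f g h k l.
Proof. by rewrite /DFm; case: (mkK _ _ f g h k l) => -> -> -> -> ->. Qed.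

Lemma DFcI (X Y : Sc) (f g : 'M_(dimC Y, dimC X)) h k l : is_Scx X -> is_Scx Y ->
  is_Smorph (mk f g h k l) -> is_Smorph (DFc X Y f g h k l).
Proof.
case/ScxP=> rX [x1 x2 x3 x4 x5] /ScxP [rY [y1 y2 y3 y4 y5]].
case/SmorphE; case: (mkK _ _ f g h k l) => -> -> -> -> -> _ cF [hf hg hh hk hl].
apply: SmorphI; first exact: DF_chain.
all: rewrite /=; hb.
Qed.

Lemma DF_morph {X Y : Sc} {F} : is_Scx X -> is_Scx Y -> is_Smorph F -> is_Smorph (DFm X Y F).
Proof. move=> sX sY mF; have [FE _ _] := SmorphE mF; rewrite /DFm; apply: DFcI => //; by rewrite -FE. Qed.

Lemma DF_one (X : Sc) : DFm X X 1%:M = 1%:M.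
Proof.
rewrite mk1 DFm_mk /DFc /DFmat [RHS]mk1; congr mk; bsimp => //; by rewrite -scalar_mx_block.
Qed.

Lemma DF_hom (X Y : Sc) F G : is_Scx X -> is_Scx Y -> Shomotopic F G ->
  Shomotopic (DFm X Y F) (DFm X Y G).
Proof.
case/ScxP=> rX [x1 x2 x3 x4 x5] /ScxP [rY [y1 y2 y3 y4 y5]].
case=> K [hK xK eK]; case: (ShomE hK xK) => KE hc.
move: KE hc eK; move: (cf K) (cg K) (ch K) (ck K) (cl K) => p q s t u -> [hp hq hs ht hu].
rewrite homotE => eK.
apply: (ShomI (desusp X) (desusp Y) _ _ (block_mx p 0 t u) (block_mx q s 0 0) 0
   (row_mx (t *m vv X + de1 Y *m q) (t *m de2 X + de1 Y *m s)) u).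
1-5: rewrite /=; hb.
rewrite /DFm /DFc DFmatB.
case: (cmpB _ _ F G) => <- <- <- <- <-; rewrite -eK.
rewrite cf_mk cg_mk ch_mk ck_mk cl_mk.
rewrite DK_hom //.
by rewrite homotE.
Qed.

Lemma DF_comp (X Y Z : Sc) F G : is_Scx X -> is_Scx Y -> is_Scx Z ->
  @is_Smorph R m rd X Y F -> @is_Smorph R m rd Y Z G ->
  Shomotopic (DFm Y Z G *m DFm X Y F) (DFm X Z (G *m F)).
Proof.
move=> sX sY sZ mF mG.
have mA := morph_comp (DF_morph sX sY mF) (DF_morph sY sZ mG).
have mB := DF_morph sX sZ (morph_comp mF mG).
case/ScxP: sX => rX [x1 x2 x3 x4 x5]; case/ScxP: sY => rY [y1 y2 y3 y4 y5].
case/ScxP: sZ => rZ [z1 z2 z3 z4 z5].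
case: (SmorphE mF) => FE _ hcF; case: (SmorphE mG) => GE _ hcG.
move: FE mA mB hcF; move: (cf F) (cg F) (ch F) (ck F) (cl F) => f g h k l -> mA mB [hf hg hh hk hl].
move: GE mA mB hcG; move: (cf G) (cg G) (ch G) (ck G) (cl G) => f' g' h' k' l' -> mA mB [hf' hg' hh' hk' hl'].
move: mA mB; rewrite mk_mul !DFm_mk.
set A := DFc Y Z _ _ _ _ _ *m _; set B := DFc X Z _ _ _ _ _ => mA mB.
have xD : (A - B) *m chi (desusp X) = chi (desusp Z) *m (A - B).
  by case: mA => _ _ xA; case: mB => _ _ xB; rewrite mulmxBl mulmxBr xA xB.
have cD : (A - B) *m tot (desusp X) = tot (desusp Z) *m (A - B).
  by case: mA => _ cA _; case: mB => _ cB _; rewrite mulmxBl mulmxBr cA cB.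
have DE := decomp xD.
have e1 : cf (A - B) = 0.
  by rewrite /A /B /DFc /DFmat mk_mul mk_opp mk_add cf_mk; bsimp; rewrite !subrr block_mx0.
have e2 : cg (A - B) = block_mx 0 0 (k' *m g) (k' *m h).
  by rewrite /A /B /DFc /DFmat mk_mul mk_opp mk_add cg_mk; bsimp; congr block_mx; zsolve.
have e3 : ch (A - B) = 0.
  by rewrite /A /B /DFc /DFmat mk_mul mk_opp mk_add ch_mk; bsimp.
have e5 : cl (A - B) = 0.
  by rewrite /A /B /DFc /DFmat mk_mul mk_opp mk_add cl_mk; bsimp; rewrite subrr.
rewrite e1 e2 e3 e5 in DE.
move: cD; rewrite DE !totE => /chainP [_ M2 _ _ _].
have kDE : ck (A - B) = rr Z *m row_mx (k' *m g) (k' *m h)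
    + row_mx (k' *m g) (k' *m h) *m Ddat_d (dd X) (de1 X) (rr X).
  apply: nullD; move: M2; rewrite ?(mul0mx, mulmx0, addr0, add0r, sub0r) => M2'; exact: M2'.
apply: (ShomI (desusp X) (desusp Z) A B 0 0 0 (row_mx (k' *m g) (k' *m h)) 0).
1-5: rewrite /=; hb.
rewrite homotE DE kDE; congr mk; rewrite ?(mulmx0, mul0mx, addr0, add0r, subr0, sub0r, oppr0) //.
by rewrite /=; bsimp.
Qed.
End DesuspF.


Section Equivs.
Context {R : comPzRingType} {m : nat} {rd : 'I_m -> int}.
Local Notation Sc := (@Scx R m rd).

Lemma SD_equiv (X : Sc) : is_Scx X -> Sequiv X (susp (desusp X)).
Proof.
case/ScxP=> [[d2 vd db ad r2] [x1 x2 x3 x4 x5]].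
pose f1 : 'M[R]_(dimC X + m + m, dimC X) := col_mx (col_mx 1%:M 0) (de1 X).
pose f2 : 'M[R]_(dimC X, dimC X + m + m) := row_mx (row_mx 1%:M 0) 0.
pose k2 : 'M[R]_(m, dimC X + m + m) := row_mx (row_mx 0 1%:M) 0.
pose p : 'M[R]_(dimC X + m + m) := block_mx 0 0 (row_mx 0 1%:M) 0.
exists (@mk R m (dimC X) (dimC (susp (desusp X))) f1 0 0 0 1%:M).
exists (@mk R m (dimC (susp (desusp X))) (dimC X) f2 0 0 k2 1%:M).
split.
- apply: SmorphI; last 5 first.
  + rewrite /f1 /=; hb.
  + exact: homog0.
  + exact: homog0.
  + exact: homog0.
  + exact: homog1.
  rewrite /chainX /f1 /=; split; bsimp => //.
  by congr col_mx; [rewrite subrr | apply: (L1 ad); zsolve].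
- apply: SmorphI; last 5 first.
  + rewrite /f2 /=; hb.
  + exact: homog0.
  + exact: homog0.
  + rewrite /k2 /=; hb.
  + exact: homog1.
  rewrite /chainX /f2 /k2 /=; split; bsimp => //.
  by rewrite addNr.
- have -> : mk f2 0 0 k2 1%:M *m mk f1 0 0 0 1%:M = 1%:M.
    by rewrite mk_mul [RHS]mk1 /f1 /f2 /k2; congr mk; bsimp.
  exact: Shom_refl.
- apply: (ShomI (susp (desusp X)) (susp (desusp X)) _ _ p 0 0 0 0).
  1-5: rewrite /p /=; hb.
  rewrite homotE mk_mul [in RHS](mk1 (dimC (susp (desusp X)))) mk_opp mk_add /f1 /f2 /k2 /p /=; congr mk; bsimp => //; last by rewrite subrr.
  by rewrite !scalar_mx_block; bsimp; rewrite addNr subrr.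
Qed.

Lemma DS_equiv (X : Sc) : is_Scx X -> Sequiv X (desusp (susp X)).
Proof.
case/ScxP=> [[d2 vd db ad r2] [x1 x2 x3 x4 x5]].
pose f1 : 'M[R]_(dimC X + m + m, dimC X) := col_mx (col_mx 1%:M 0) 0.
pose h1 : 'M[R]_(dimC X + m + m, m) := col_mx (col_mx 0 1%:M) 0.
pose f2 : 'M[R]_(dimC X, dimC X + m + m) := row_mx (row_mx 1%:M 0) (de2 X).
pose p : 'M[R]_(dimC X + m + m) := block_mx 0 (col_mx 0 (- 1%:M)) 0 0.
exists (@mk R m (dimC X) (dimC (desusp (susp X))) f1 0 h1 0 1%:M).
exists (@mk R m (dimC (desusp (susp X))) (dimC X) f2 0 0 0 1%:M).
split.
- apply: SmorphI; last 5 first.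
  + rewrite /f1 /=; hb.
  + exact: homog0.
  + rewrite /h1 /=; hb.
  + exact: homog0.
  + exact: homog1.
  rewrite /chainX /f1 /h1 /=; split; bsimp => //.
  by rewrite addNr.
- apply: SmorphI; last 5 first.
  + rewrite /f2 /=; hb.
  + exact: homog0.
  + exact: homog0.
  + exact: homog0.
  + exact: homog1.
  rewrite /chainX /f2 /=; split; bsimp => //.
  by rewrite addNr; congr row_mx; apply: (L1 db); zsolve.
- have -> : mk f2 0 0 0 1%:M *m mk f1 0 h1 0 1%:M = 1%:M.
    by rewrite mk_mul [RHS]mk1 /f1 /f2 /h1; congr mk; bsimp.
  exact: Shom_refl.
- apply: (ShomI (desusp (susp X)) (desusp (susp X)) _ _ p 0 0 0 0).
  1-5: rewrite /p /=; hb.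
  rewrite homotE mk_mul [in RHS](mk1 (dimC (desusp (susp X)))) mk_opp mk_add /f1 /f2 /h1 /p /=; congr mk; bsimp => //; last by rewrite subrr.
  by rewrite !scalar_mx_block; bsimp; rewrite !subrr.
Qed.
End Equivs.


Section Functor.
Context {R : comPzRingType} {m : nat} {rd : 'I_m -> int}.
Local Notation Sc := (@Scx R m rd).
Variable Phi : Sc -> Sc.
Variable Fm : forall X Y : Sc, 'M[R]_(dimC Y + dimC Y + m, dimC X + dimC X + m) ->
  'M[R]_(dimC (Phi Y) + dimC (Phi Y) + m, dimC (Phi X) + dimC (Phi X) + m).
Hypothesis Hmor : forall (X Y : Sc) F, is_Scx X -> is_Scx Y -> @is_Smorph R m rd X Y F ->
  is_Smorph (Fm X Y F).
Hypothesis Hone : forall X : Sc, Fm X X 1%:M = 1%:M.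
Hypothesis Hhom : forall (X Y : Sc) F G, is_Scx X -> is_Scx Y -> @Shomotopic R m rd X Y F G ->
  Shomotopic (Fm X Y F) (Fm X Y G).
Hypothesis Hcomp : forall (X Y Z : Sc) F G, is_Scx X -> is_Scx Y -> is_Scx Z ->
  @is_Smorph R m rd X Y F -> @is_Smorph R m rd Y Z G ->
  Shomotopic (Fm Y Z G *m Fm X Y F) (Fm X Z (G *m F)).

Lemma Fequiv (X Y : Sc) : is_Scx X -> is_Scx Y -> Sequiv X Y -> Sequiv (Phi X) (Phi Y).
Proof.
move=> sX sY [F [G [mF mG h1 h2]]].
exists (Fm X Y F), (Fm Y X G); split; try exact: Hmor.
- apply: (Shom_trans (Hcomp _ _ _ _ _ sX sY sX mF mG)); rewrite -(Hone X); exact: Hhom.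
- apply: (Shom_trans (Hcomp _ _ _ _ _ sY sX sY mG mF)); rewrite -(Hone Y); exact: Hhom.
Qed.
End Functor.

Arguments susp_Scx {R m rd X} _.
Arguments desusp_Scx {R m rd X} _.
Arguments SD_equiv {R m rd X} _.
Arguments DS_equiv {R m rd X} _.
Arguments Sequiv_sym {R m rd X Y} _.
Arguments Sequiv_trans {R m rd X Y Z} _ _.

Section Final.
Context {R : comPzRingType} {m : nat} {rd : 'I_m -> int}.
Local Notation Sc := (@Scx R m rd).

Lemma susp_equiv (X Y : Sc) : is_Scx X -> is_Scx Y -> Sequiv X Y -> Sequiv (susp X) (susp Y).
Proof.
apply: (@Fequiv R m rd susp SFm) => //.
- by move=> *; apply: SF_morph.
- exact: SF_one.
- exact: SF_hom.
- exact: SF_comp.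
Qed.

Lemma desusp_equiv (X Y : Sc) : is_Scx X -> is_Scx Y -> Sequiv X Y -> Sequiv (desusp X) (desusp Y).
Proof.
apply: (@Fequiv R m rd desusp DFm) => //.
- by move=> *; apply: DF_morph.
- exact: DF_one.
- exact: DF_hom.
- exact: DF_comp.
Qed.

Lemma iter_susp_Scx k {X : Sc} : is_Scx X -> is_Scx (iter k susp X).
Proof. by move=> sX; elim: k => //= k IH; apply: susp_Scx. Qed.
Lemma iter_desusp_Scx k {X : Sc} : is_Scx X -> is_Scx (iter k desusp X).
Proof. by move=> sX; elim: k => //= k IH; apply: desusp_Scx. Qed.

Lemma iter_susp_equiv k {X Y : Sc} : is_Scx X -> is_Scx Y -> Sequiv X Y ->
  Sequiv (iter k susp X) (iter k susp Y).
Proof.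
move=> sX sY e; elim: k => //= k IH.
by apply: susp_equiv => //; apply: iter_susp_Scx.
Qed.
Lemma iter_desusp_equiv k {X Y : Sc} : is_Scx X -> is_Scx Y -> Sequiv X Y ->
  Sequiv (iter k desusp X) (iter k desusp Y).
Proof.
move=> sX sY e; elim: k => //= k IH.
by apply: desusp_equiv => //; apply: iter_desusp_Scx.
Qed.

Lemma mixed1 a : forall b (X : Sc), is_Scx X ->
  Sequiv (iter a susp (iter b.+1 desusp X)) (suspn (Posz a + Negz b) X).
Proof.
elim: a => [|a IH] b X sX.
  by rewrite add0r; apply: Sequiv_refl.
rewrite iterSr iterS.
have sW := iter_desusp_Scx b sX.
apply: (Sequiv_trans (iter_susp_equiv a (susp_Scx (desusp_Scx sW)) sW
          (Sequiv_sym (SD_equiv sW)))).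
case: b sW => [|b] sW.
  have -> : Posz a.+1 + Negz 0 = Posz a by rewrite NegzE; lia.
  exact: Sequiv_refl.
have -> : Posz a.+1 + Negz b.+1 = Posz a + Negz b by rewrite !NegzE; lia.
exact: IH.
Qed.

Lemma mixed2 b : forall a (X : Sc), is_Scx X ->
  Sequiv (iter a.+1 desusp (iter b susp X)) (suspn (Negz a + Posz b) X).
Proof.
elim: b => [|b IH] a X sX.
  by rewrite addr0; apply: Sequiv_refl.
rewrite iterSr iterS.
have sW := iter_susp_Scx b sX.
apply: (Sequiv_trans (iter_desusp_equiv a (desusp_Scx (susp_Scx sW)) sW
          (Sequiv_sym (DS_equiv sW)))).
case: a => [|a].
  have -> : Negz 0 + Posz b.+1 = Posz b by rewrite NegzE; lia.
  exact: Sequiv_refl.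
have -> : Negz a.+1 + Posz b.+1 = Negz a + Posz b by rewrite !NegzE; lia.
exact: IH.
Qed.

Theorem corollary2p8' (X : Sc) (hX : is_Scx X) (i j : int) :
  Sequiv (suspn i (suspn j X)) (suspn (i + j) X).
Proof.
case: i => a; case: j => b.
- by rewrite -PoszD /= -iterD; apply: Sequiv_refl.
- exact: mixed1.
- exact: mixed2.
- have -> : Negz a + Negz b = Negz (a + b).+1 by rewrite !NegzE; lia.
  change (Sequiv (iter a.+1 desusp (iter b.+1 desusp X)) (iter (a + b).+2 desusp X)).
  rewrite -addnS -addSn iterD; exact: Sequiv_refl.
Qed.
End Final.


Theorem corollary2p8 (R : comPzRingType) (m : nat) (rd : 'I_m -> int)
  (X : @Scx R m rd) (hX : is_Scx X) (i j : int) :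
  Sequiv (suspn i (suspn j X)) (suspn (i + j) X).
Proof. exact: corollary2p8'. Qed.
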